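(* Every element of $\widehat{\Pi}_{3/3,3}$ can be written as \[ \psi_a(z)=\frac{\frac16\left(-6a^3+18a^2-9a+1\right)z^3+\frac12\left(6a^2-6a+1\right)z^2+(1-3a)z+1}{(1-az)^3},\qquad a\in\mathbb{R}. \] Then $\widehat{R}_{3/3,3}=2+\sqrt8$. This value is attained for $a=\frac{2-\sqrt2}{4}$, and $R(\psi_a)<2+\sqrt8$ for every other $a\in\mathbb{R}$.
   Context: A real rational function $\psi$ is always considered in lowest terms, as a smooth function on $\mathbb{R}$ minus its finitely many poles. It is absolutely monotonic at $x\in\mathbb{R}$ if $x$ is not a pole and $\psi^{(k)}(x)\ge 0$ for all integers $k\ge 0$. The radius of absolute monotonicity is $R(\psi)=\sup\big(\{r\in[0,\infty): \psi \text{ is absolutely monotonic at each point of } [-r,0]\}\cup\{0\}\big)\in[0,+\infty]$. $\widehat{\Pi}_{s/s,p}$ denotes the set of real rational functions $\psi(z)=P(z)/(1-az)^s$ with $P$ a real polynomial of degree at most $s$ and $a\in\mathbb{R}$, such that $\psi(z)-e^z=O(z^{p+1})$ as $z\to0$. Finally, $\widehat{R}_{s/s,p}=\sup\{R(\psi):\psi\in\widehat{\Pi}_{s/s,p}\}$. *)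

(* Defs.v *)
From Stdlib Require Import Reals Lra List.
Open Scope R_scope.

(* Real polynomials as coefficient lists [c0; c1; ...] (lowest degree first),
   evaluated by Horner's scheme. *)
Fixpoint peval (l : list R) (x : R) : R :=
  match l with
  | nil => 0
  | c :: l' => c + x * peval l' x
  end.

Definition abs_mono_fun (g : R -> R) (x : R) : Prop :=
  exists delta : R, 0 < delta /\
  exists f : nat -> R -> R,
    (forall y, Rabs (y - x) < delta -> f O y = g y) /\
    (forall k y, Rabs (y - x) < delta -> derivable_pt_lim (f k) y (f (S k) y)) /\
    (forall k, 0 <= f k x).

(* The real rational function N/D (N, D polynomial functions, D not the zero
   polynomial), taken in lowest terms.  A point x is not a pole iff N/D admits
   a representation p1/q1 (p1*D = N*q1 as polynomials) with q1(x) <> 0; near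
   such x the rational function coincides with p1/q1. *)
Definition rat_abs_mono (N D : R -> R) (x : R) : Prop :=
  exists p1 q1 : list R,
    (forall y, peval p1 y * D y = N y * peval q1 y) /\
    peval q1 x <> 0 /\
    abs_mono_fun (fun y => peval p1 y / peval q1 y) x.

(* The set {r in [0,oo) : N/D abs. monotonic at each point of [-r,0]} U {0};
   the radius of absolute monotonicity R(N/D) is its supremum in [0,+oo]. *)
Definition AM_radius_set (N D : R -> R) (r : R) : Prop :=
  (0 <= r /\ forall x, - r <= x <= 0 -> rat_abs_mono N D x) \/ r = 0.

Definition den (s : nat) (a : R) (z : R) : R := (1 - a * z) ^ s.

(* (P, a) describes an element P(z)/(1-az)^s of \hat\Pi_{s/s,p}:
   deg P <= s and psi(z) - e^z = O(z^(p+1)) as z -> 0. *)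
Definition PiHat (s p : nat) (P : list R) (a : R) : Prop :=
  (length P <= S s)%nat /\
  exists C delta : R, 0 < delta /\
    forall z, Rabs z < delta ->
      Rabs (peval P z / den s a z - exp z) <= C * Rabs z ^ (S p).

Definition psi_num (a : R) : list R :=
  1 :: (1 - 3 * a) ::  ((6 * a ^ 2 - 6 * a + 1) / 2) ::
   ((- 6 * a ^ 3 + 18 * a ^ 2 - 9 * a + 1) / 6) :: nil.

(* Main.v *)
Require Import Defs.
From Stdlib Require Import Reals Lra Lia List Classical FunctionalExtensionality.
From Coquelicot Require Import Coquelicot.
Open Scope R_scope.

Definition Pa (a y : R) : R :=
  1 + (1 - 3*a)*y + (6*a^2 - 6*a + 1)/2 * y^2 + (-6*a^3 + 18*a^2 - 9*a + 1)/6 * y^3.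

Lemma peval_psi a y : peval (psi_num a) y = Pa a y.
Proof. unfold Pa; simpl; field. Qed.

Lemma den_eq a y : den 3 a y = (1 - a*y)^3.
Proof. reflexivity. Qed.

Definition c0 a := (6*a^3 - 18*a^2 + 9*a - 1)/(6*a^3).
Definition c1 a := (12*a^2-8*a+1)/(2*a^3).
Definition c2 a := -(8*a^2-7*a+1)/(2*a^3).
Definition c3 a := (6*a^2-6*a+1)/(6*a^3).
Definition e1 a k := c1 a * a^k * INR (Factorial.fact k).
Definition e2 a k := c2 a * a^k * INR (Factorial.fact (S k)).
Definition e3 a k := c3 a * a^k * INR (Factorial.fact (S (S k))) / 2.
Definition g a k y :=
  (match k with O => c0 a | S _ => 0 end) + e1 a k / (1-a*y)^(S k)
   + e2 a k / (1-a*y)^(S (S k)) + e3 a k / (1-a*y)^(S (S (S k))).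

Lemma der_term a c n y : 1 - a*y <> 0 ->
  is_derive (fun y => c / (1-a*y)^(S n)) y (c * INR (S n) * a / (1-a*y)^(S (S n))).
Proof.
  intro H. assert ((1-a*y)^n <> 0) by (apply pow_nonzero; exact H).
  auto_derive.
  - apply Rmult_integral_contrapositive; split; [lra|].
    replace (1 + - (a*y)) with (1 - a*y) by ring. auto.
  - replace (1 + - (a*y)) with (1 - a*y) by ring.
    simpl. field. split; auto.
Qed.

Lemma g0_eq a y : a <> 0 -> 1 - a*y <> 0 -> g a 0 y = Pa a y / (1-a*y)^3.
Proof.
  intros Ha Hw. unfold g, e1, e2, e3, c0, c1, c2, c3, Pa. simpl. field. split; auto.
Qed.

Lemma is_derive_Rplus (f h : R -> R) x df dh :
  is_derive f x df -> is_derive h x dh -> is_derive (fun y => f y + h y) x (df + dh).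
Proof. intros H1 H2. apply is_derive_Reals. apply is_derive_Reals in H1. apply is_derive_Reals in H2.
  exact (derivable_pt_lim_plus f h x df dh H1 H2). Qed.

Lemma g_der a k y : 1 - a*y <> 0 -> is_derive (g a k) y (g a (S k) y).
Proof.
  intro Hw.
  replace (g a (S k) y) with (0 + e1 a k * INR (S k) * a / (1-a*y)^(S (S k))
     + e2 a k * INR (S (S k)) * a / (1-a*y)^(S (S (S k)))
     + e3 a k * INR (S (S (S k))) * a / (1-a*y)^(S (S (S (S k))))).
  2:{ unfold g, e1, e2, e3. rewrite !fact_simpl. rewrite !mult_INR.
      simpl pow. field. split; [apply pow_nonzero|]; auto. }
  unfold g.
  apply is_derive_Rplus; [apply is_derive_Rplus; [apply is_derive_Rplus|]|].
  - destruct k; [exact (is_derive_const (c0 a) y) | exact (is_derive_const 0 y)].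
  - apply der_term; auto.
  - apply der_term; auto.
  - apply der_term; auto.
Qed.

Lemma local_deriv (f h : R -> R) y l r : 0 < r ->
  (forall z, Rabs (z - y) < r -> f z = h z) ->
  derivable_pt_lim f y l -> derivable_pt_lim h y l.
Proof.
  intros Hr Hag Hd eps Heps.
  destruct (Hd eps Heps) as [d Hdd].
  assert (Hm : 0 < Rmin d r) by (apply Rmin_pos; [apply cond_pos|exact Hr]).
  exists (mkposreal _ Hm). intros hh Hh0 Hhl. simpl in Hhl.
  rewrite <- (Hag (y + hh)), <- (Hag y).
  - apply Hdd; auto. apply Rlt_le_trans with (1 := Hhl); apply Rmin_l.
  - replace (y - y) with 0 by ring. rewrite Rabs_R0; exact Hr.
  - replace (y + hh - y) with hh by ring.
    apply Rlt_le_trans with (1 := Hhl); apply Rmin_r.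
Qed.

Lemma peval_cont l x : continuity_pt (peval l) x.
Proof.
  induction l as [|c l IH].
  - simpl. apply (continuity_pt_const (fun _ => 0)). intros u v; reflexivity.
  - change (continuity_pt (fct_cte c + (id * peval l))%F x).
    apply continuity_pt_plus; [apply continuity_pt_const; intros u v; reflexivity|].
    apply continuity_pt_mult; [apply derivable_continuous_pt, derivable_pt_id| exact IH].
Qed.

Lemma cont_nonzero f x : continuity_pt f x -> f x <> 0 ->
  exists d, 0 < d /\ forall y, Rabs (y - x) < d -> f y <> 0.
Proof.
  intros Hc Hx.
  destruct (Hc (Rabs (f x)) (Rabs_pos_lt _ Hx)) as [d [Hd Hy]].
  exists d. split; auto. intros y Hyx Hfy.
  destruct (Req_dec y x) as [->|Hne]; [contradiction|].
  assert (H := Hy y (conj (conj I (not_eq_sym Hne)) Hyx)).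
  simpl in H. unfold R_dist in H. rewrite Hfy in H.
  replace (0 - f x) with (- f x) in H by ring. rewrite Rabs_Ropp in H. lra.
Qed.

Lemma transfer (N D : R -> R) (G : nat -> R -> R) x eps : 0 < eps ->
  (forall y, Rabs (y - x) < eps -> D y <> 0 /\ G 0%nat y = N y / D y /\
        forall k, derivable_pt_lim (G k) y (G (S k) y)) ->
  rat_abs_mono N D x -> forall k, 0 <= G k x.
Proof.
  intros Heps HG [p1 [q1 [Hpq [Hq [d [Hd [f [Hf0 [Hfd Hfp]]]]]]]]].
  destruct (cont_nonzero _ _ (peval_cont q1 x) Hq) as [d2 [Hd2 Hq2]].
  set (r := Rmin eps (Rmin d d2)).
  assert (Hr : 0 < r) by (apply Rmin_pos; auto; apply Rmin_pos; auto).
  assert (Hr1 : r <= eps) by apply Rmin_l.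
  assert (Hr2 : r <= d) by (eapply Rle_trans; [apply Rmin_r|apply Rmin_l]).
  assert (Hr3 : r <= d2) by (eapply Rle_trans; [apply Rmin_r|apply Rmin_r]).
  assert (Hall : forall k y, Rabs (y - x) < r -> f k y = G k y).
  { induction k as [|k IH]; intros y Hy.
    - rewrite Hf0 by lra. destruct (HG y ltac:(lra)) as [HD [HG0 _]].
      rewrite HG0. assert (Hqy : peval q1 y <> 0) by (apply Hq2; lra).
      assert (E := Hpq y).
      apply (Rmult_eq_reg_r (peval q1 y * D y)).
      + replace (N y / D y * (peval q1 y * D y)) with (N y * peval q1 y) by (field; auto).
        rewrite <- E. field. auto.
      + apply Rmult_integral_contrapositive; auto.
    - assert (H1 := Hfd k y ltac:(lra)).
      destruct (HG y ltac:(lra)) as [_ [_ H2]].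
      apply (uniqueness_limite (G k) y); [|apply H2].
      apply (local_deriv (f k) (G k) y _ (r - Rabs (y - x))); [lra| |exact H1].
      intros z Hz. apply IH.
      replace (z - x) with ((z - y) + (y - x)) by ring.
      eapply Rle_lt_trans; [apply Rabs_triang|]. lra. }
  intro k. rewrite <- Hall; [apply Hfp|]. replace (x - x) with 0 by ring.
  rewrite Rabs_R0; exact Hr.
Qed.
Definition F a w m := 6*(12*a^2-8*a+1)*w^2 - 6*(8*a^2-7*a+1)*(m+1)*w + (6*a^2-6*a+1)*(m+1)*(m+2).

Lemma g_F a n y : a <> 0 -> 1 - a*y <> 0 ->
  g a (S n) y = a^(S n) * INR (Factorial.fact (S n)) * F a (1-a*y) (INR (S n))
      / (12 * a^3 * (1-a*y)^(S (S (S (S n))))).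
Proof.
  intros Ha Hw. unfold g, e1, e2, e3, c1, c2, c3, F.
  set (m := S n). rewrite !fact_simpl, !mult_INR, !S_INR.
  assert ((1-a*y)^m <> 0) by (apply pow_nonzero; auto).
  assert (a^m <> 0) by (apply pow_nonzero; auto).
  simpl pow. field. repeat split; auto.
  apply pow_nonzero; auto.
Qed.
Lemma s2_sq : sqrt 2 * sqrt 2 = 2.
Proof. apply sqrt_sqrt; lra. Qed.
Lemma s2_pos : 0 < sqrt 2.
Proof. apply sqrt_lt_R0; lra. Qed.
Lemma s2_bounds : 1.4142 < sqrt 2 < 1.4143.
Proof. pose proof s2_sq; pose proof s2_pos. split; nra. Qed.
Lemma sqrt8 : sqrt 8 = 2 * sqrt 2.
Proof.
  pose proof s2_sq; pose proof s2_pos.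
  replace 8 with ((2*sqrt 2)*(2*sqrt 2)) by nra. apply sqrt_square. lra.
Qed.

Lemma F_ast w m : F ((2-sqrt 2)/4) w m = (9-6*sqrt 2)*(w-(1+sqrt 2/2))^2 + (3-sqrt 2*3/2)*(1-m)*(w-(1+sqrt 2/2)) + (m-1)*(m-2)/4.
Proof.
  pose proof s2_sq as hs. set (s := sqrt 2) in *. unfold F.
  assert (E : F ((2-s)/4) w m - ((9-6*s)*(w-(1+s/2))^2 + (3-s*3/2)*(1-m)*(w-(1+s/2)) + (m-1)*(m-2)/4)
    = (s*s-2)*((9/2)*w^2 + (-3)*m*w + (-9)*w + (3/8)*m^2 + (15/8)*m + (15/4) + (3/2)*s)) by (unfold F; field).
  rewrite hs in E. unfold F in E. lra.
Qed.

Lemma F_S2 a : F a (1 + a*(2+2*sqrt 2)) 2 = a*(a-(2-sqrt 2)/4)*((72+60*sqrt 2) - (432+312*sqrt 2)*a + (864+576*sqrt 2)*a^2).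
Proof.
  pose proof s2_sq as hs. set (s := sqrt 2) in *.
  assert (E : F a (1 + a*(2+2*s)) 2 - a*(a-(2-s)/4)*((72+60*s) - (432+312*s)*a + (864+576*s)*a^2)
    = (s*s-2)*((288)*a^4 + (-336)*a^3 + (102)*a^2 + (-15)*a)) by (unfold F; field).
  rewrite hs in E. lra.
Qed.

Lemma F_S1 a : F a (1 + a*(2+2*sqrt 2)) 1 = a^2*(a-(2-sqrt 2)/4)*((-336-216*sqrt 2) + (864+576*sqrt 2)*a).
Proof.
  pose proof s2_sq as hs. set (s := sqrt 2) in *.
  assert (E : F a (1 + a*(2+2*s)) 1 - a^2*(a-(2-s)/4)*((-336-216*s) + (864+576*s)*a)
    = (s*s-2)*((288)*a^4 + (-336)*a^3 + (78)*a^2)) by (unfold F; field).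
  rewrite hs in E. lra.
Qed.

Lemma ast_S : (2-sqrt 2)/4 * (2+2*sqrt 2) = sqrt 2/2.
Proof. pose proof s2_sq as hs. set (s := sqrt 2) in *. nra. Qed.

Lemma Pa_ast_pos x : -(2 + 2*sqrt 2) <= x <= 0 -> 0 < Pa ((2 - sqrt 2)/4) x.
Proof.
  intros Hx. pose proof s2_sq as hs. pose proof s2_bounds as hb.
  set (s := sqrt 2) in *.
  assert (E : Pa ((2-s)/4) x - (1+(s*3/4-1/2)*x + x^2/8 + (11/48 - s*5/32)*x^3)
     = (s*s-2)*((3/16)*x^2 + (3/32)*x^3 + (1/64)*s*x^3)) by (unfold Pa; field).
  rewrite hs in E.
  assert (E2 : Pa ((2-s)/4) x = 1+(s*3/4-1/2)*x + x^2/8 + (11/48 - s*5/32)*x^3) by lra.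
  rewrite E2. set (u := -x).
  replace x with (-u) by (unfold u; ring).
  assert (Hu : 0 <= u <= 4.8286) by (unfold u; lra).
  assert (L : 0 < 1 - 0.560725*u + u^2/8 - 0.0082*u^3).
  { assert (0 <= u^2*(4.8286-u)) by (apply Rmult_le_pos; nra). nra. }
  assert (u * (s*3/4 - 1/2) <= 0.560725 * u) by nra.
  assert (u^3 * (11/48 - s*5/32) <= 0.0082 * u^3).
  { assert (0 <= u^3) by (apply pow_le; lra). nra. }
  nra.
Qed.

Lemma peval_q1 a y : peval (1 :: (-3*a) :: (3*a^2) :: (-a^3) :: nil) y = (1 - a*y)^3.
Proof. simpl. ring. Qed.

Lemma F_ast_nonneg w n : 1 <= w <= 1 + sqrt 2 / 2 ->
  0 <= F ((2 - sqrt 2)/4) w (INR (S n)).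
Proof.
  intros Hw. rewrite F_ast. pose proof s2_bounds as hb.
  set (s := sqrt 2) in *. rewrite S_INR.
  assert (Hn : 0 <= INR n) by apply pos_INR.
  assert (H1 : 0 <= (INR n + 1 - 1) * (INR n + 1 - 2)).
  { destruct n as [|n]. - simpl; lra. - rewrite S_INR. pose proof (pos_INR n). nra. }
  assert (H2 : 0 <= (9 - 6*s) * (w - (1 + s/2))^2) by (apply Rmult_le_pos; [lra| apply pow2_ge_0]).
  assert (H3 : 0 <= (1 - (INR n + 1)) * (w - (1 + s/2))) by nra.
  assert (H4 : 0 <= (3 - s*3/2) * ((1 - (INR n + 1)) * (w - (1 + s/2)))) by (apply Rmult_le_pos; lra).
  nra.
Qed.

Lemma am_ast x : -(2 + sqrt 8) <= x <= 0 ->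
  rat_abs_mono (peval (psi_num ((2 - sqrt 2)/4))) (den 3 ((2 - sqrt 2)/4)) x.
Proof.
  rewrite sqrt8. intro Hx. pose proof s2_bounds as hb. pose proof (ast_S) as HaS.
  set (a := (2 - sqrt 2)/4) in *.
  assert (Ha : 0 < a) by (unfold a; lra).
  assert (Hw : 1 <= 1 - a*x <= 1 + sqrt 2/2).
  { assert (0 <= a * (x + (2 + 2*sqrt 2))) by (apply Rmult_le_pos; lra).
    assert (a * x <= 0) by nra. nra. }
  exists (psi_num a), (1 :: (-3*a) :: (3*a^2) :: (-a^3) :: nil).
  split; [intro y; rewrite peval_q1, den_eq; ring|].
  split; [rewrite peval_q1; apply pow_nonzero; lra|].
  exists ((1 - a*x)/a). split; [apply Rdiv_lt_0_compat; lra|].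
  exists (g a).
  assert (Hball : forall y, Rabs (y - x) < (1 - a*x)/a -> 0 < 1 - a*y).
  { intros y Hy. apply Rabs_def2 in Hy. destruct Hy as [Hy1 Hy2].
    apply (Rmult_lt_compat_l a) in Hy1; auto.
    replace (a * ((1 - a*x)/a)) with (1 - a*x) in Hy1 by (field; lra). lra. }
  split; [|split].
  - intros y Hy. specialize (Hball y Hy). rewrite g0_eq by lra.
    rewrite peval_psi, peval_q1. reflexivity.
  - intros k y Hy. specialize (Hball y Hy). apply is_derive_Reals. apply g_der. lra.
  - intros [|n].
    + rewrite g0_eq by lra. apply Rmult_le_pos; [left; apply Pa_ast_pos; lra|].
      left; apply Rinv_0_lt_compat; apply pow_lt; lra.
    + rewrite g_F by lra. unfold Rdiv. apply Rmult_le_pos.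
      * apply Rmult_le_pos; [apply Rmult_le_pos|].
        -- left; apply pow_lt; lra.
        -- apply pos_INR.
        -- apply F_ast_nonneg; lra.
      * left; apply Rinv_0_lt_compat. apply Rmult_lt_0_compat; [apply Rmult_lt_0_compat; [lra|apply pow_lt; lra]| apply pow_lt; lra].
Qed.

Lemma am_nonneg a x k : a <> 0 -> 0 < 1 - a*x ->
  rat_abs_mono (peval (psi_num a)) (den 3 a) x -> 0 <= g a k x.
Proof.
  intros Ha Hw Ham.
  assert (Hpa : 0 < Rabs a) by (apply Rabs_pos_lt; auto).
  apply (transfer (peval (psi_num a)) (den 3 a) (g a) x ((1 - a*x)/Rabs a)); auto.
  - apply Rdiv_lt_0_compat; lra.
  - intros y Hy.
    assert (Hwy : 0 < 1 - a*y).
    { assert (H1 : Rabs (a*(y-x)) < 1 - a*x).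
      { rewrite Rabs_mult. apply (Rmult_lt_compat_l (Rabs a)) in Hy; auto.
        replace (Rabs a * ((1 - a*x)/Rabs a)) with (1 - a*x) in Hy by (field; lra). lra. }
      apply Rabs_def2 in H1. lra. }
    split; [rewrite den_eq; apply pow_nonzero; lra|].
    split; [rewrite g0_eq by lra; rewrite peval_psi, den_eq; reflexivity|].
    intro k'. apply is_derive_Reals, g_der. lra.
Qed.

Lemma g_sign a n x : 0 < a -> 0 < 1 - a*x -> 0 <= g a (S n) x ->
  0 <= F a (1 - a*x) (INR (S n)).
Proof.
  intros Ha Hw H. rewrite g_F in H by lra.
  destruct (Rle_or_lt 0 (F a (1 - a*x) (INR (S n)))) as [|HF]; auto. exfalso.
  assert (P1 : 0 < a ^ S n * INR (Factorial.fact (S n))).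
  { apply Rmult_lt_0_compat; [apply pow_lt; lra| apply INR_fact_lt_0]. }
  assert (P2 : 0 < 12 * a ^ 3 * (1 - a * x) ^ S (S (S (S n)))).
  { apply Rmult_lt_0_compat; [apply Rmult_lt_0_compat; [lra|apply pow_lt; lra]| apply pow_lt; lra]. }
  assert (0 < - (a ^ S n * INR (Factorial.fact (S n)) * F a (1 - a * x) (INR (S n)))) by nra.
  assert (0 < - (a ^ S n * INR (Factorial.fact (S n)) * F a (1 - a * x) (INR (S n))) / (12 * a ^ 3 * (1 - a * x) ^ S (S (S (S n))))) by (apply Rdiv_lt_0_compat; auto).
  unfold Rdiv in *. lra.
Qed.

Lemma g0_sign a x : 0 < a -> 0 < 1 - a*x -> 0 <= g a 0 x -> 0 <= Pa a x.
Proof.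
  intros Ha Hw H. rewrite g0_eq in H by lra.
  destruct (Rle_or_lt 0 (Pa a x)) as [|HF]; auto. exfalso.
  assert (0 < (1-a*x)^3) by (apply pow_lt; lra).
  assert (0 < - Pa a x / (1-a*x)^3) by (apply Rdiv_lt_0_compat; lra).
  unfold Rdiv in *. lra.
Qed.

Lemma notam_ast x : -(3 + 2*sqrt 2) <= x < -(2 + 2*sqrt 2) ->
  ~ rat_abs_mono (peval (psi_num ((2 - sqrt 2)/4))) (den 3 ((2 - sqrt 2)/4)) x.
Proof.
  intros Hx Ham. pose proof s2_bounds as hb. pose proof (ast_S) as HaS.
  set (a := (2 - sqrt 2)/4) in *.
  assert (Ha : 0 < a) by (unfold a; lra).
  assert (Hw : 1 + sqrt 2/2 < 1 - a*x <= 1 + sqrt 2/2 + a).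
  { assert (0 < a * (-(2 + 2*sqrt 2) - x)) by (apply Rmult_lt_0_compat; lra).
    assert (0 <= a * (x + (3 + 2*sqrt 2))) by (apply Rmult_le_pos; lra).
    nra. }
  assert (H := am_nonneg a x 2 ltac:(lra) ltac:(lra) Ham).
  assert (HF : F a (1 - a*x) (INR 2) < 0).
  { unfold a; rewrite F_ast. fold a. simpl INR.
    set (d := 1 - a*x - (1 + sqrt 2/2)) in *.
    assert (0 < d <= a) by (unfold d; lra).
    assert ((9 - 6*sqrt 2)*d < 3 - sqrt 2*3/2) by (unfold a in *; nra).
    nra. }
  assert (H2 := g_sign a 1 x Ha ltac:(lra) H). change (INR (S 1)) with (INR 2) in H2. lra.
Qed.

Definition h0 (k : nat) (y : R) : R :=
  match k with
  | O => 1 + y + y^2/2 + y^3/6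
  | 1%nat => 1 + y + y^2/2
  | 2%nat => 1 + y
  | 3%nat => 1
  | _ => 0
  end.

Lemma h0_der k y : derivable_pt_lim (h0 k) y (h0 (S k) y).
Proof.
  apply is_derive_Reals.
  destruct k as [|[|[|[|k]]]]; unfold h0.
  - auto_derive; [exact I| simpl; lra].
  - auto_derive; [exact I| simpl; lra].
  - auto_derive; [exact I| simpl; lra].
  - exact (is_derive_const 1 y).
  - exact (is_derive_const 0 y).
Qed.

Lemma notam_zero : ~ rat_abs_mono (peval (psi_num 0)) (den 3 0) (-2).
Proof.
  intro H.
  assert (Hn := transfer (peval (psi_num 0)) (den 3 0) h0 (-2) 1 ltac:(lra)).
  assert (HH : forall y, Rabs (y - -2) < 1 -> den 3 0 y <> 0 /\ h0 0%nat y = peval (psi_num 0) y / den 3 0 y /\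
        forall k, derivable_pt_lim (h0 k) y (h0 (S k) y)).
  { intros y _. rewrite den_eq, peval_psi. unfold Pa. split; [simpl; lra|].
    split; [simpl; field|]. intro; apply h0_der. }
  specialize (Hn HH H 2%nat). simpl in Hn. lra.
Qed.

Lemma closure_lemma f c : 0 < c -> (forall x, -c < x <= 0 -> 0 <= f x) ->
  continuity_pt f (-c) -> 0 <= f (-c).
Proof.
  intros Hc Hf Hcont.
  destruct (Rle_or_lt 0 (f (-c))) as [|Hneg]; auto. exfalso.
  destruct (Hcont (- f (-c)) ltac:(lra)) as [d [Hd Hy]].
  set (y := -c + Rmin d c / 2).
  assert (Hm : 0 < Rmin d c) by (apply Rmin_pos; auto).
  assert (Hm1 : Rmin d c <= d) by apply Rmin_l.
  assert (Hm2 : Rmin d c <= c) by apply Rmin_r.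
  assert (Hyy : D_x no_cond (-c) y /\ R_dist y (-c) < d).
  { split; [split; [exact I| unfold y; lra]|].
    unfold R_dist, y. replace (-c + Rmin d c / 2 - -c) with (Rmin d c / 2) by ring.
    rewrite Rabs_right; lra. }
  specialize (Hy y Hyy). simpl in Hy. unfold R_dist in Hy.
  assert (0 <= f y) by (apply Hf; unfold y; lra).
  apply Rabs_def2 in Hy. lra.
Qed.

Lemma g_cont a k x : 1 - a*x <> 0 -> continuity_pt (g a k) x.
Proof.
  intro Hw. apply derivable_continuous_pt. exists (g a (S k) x).
  apply is_derive_Reals, g_der; auto.
Qed.

Lemma key a : a <> (2 - sqrt 2)/4 ->
  ~ (forall x, -(2 + sqrt 8) < x <= 0 -> rat_abs_mono (peval (psi_num a)) (den 3 a) x).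
Proof.
  intros Hne Hall. rewrite sqrt8 in Hall.
  pose proof s2_bounds as hb.
  destruct (Rtotal_order a 0) as [Hneg|[Hz|Hpos]].
  -
    assert (H := am_nonneg a 0 4 ltac:(lra) ltac:(lra) (Hall 0 ltac:(lra))).
    assert (E : g a 4 0 = 12*a*(2*a-1)*(a-1)).
    { rewrite g_F by lra. unfold F. simpl. field. lra. }
    rewrite E in H. nra.
  - subst a. apply notam_zero. apply Hall. lra.
  - assert (Hg : forall k x, -(2 + 2*sqrt 2) < x <= 0 -> 0 <= g a k x).
    { intros k x Hx. apply am_nonneg; [lra| |apply Hall; lra]. nra. }
    assert (HS : forall k, 0 <= g a k (-(2 + 2*sqrt 2))).
    { intro k. apply closure_lemma; [lra|intros; apply Hg; lra|].
      apply g_cont. nra. }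
    assert (Hw0 : 0 < 1 - a * (-(2 + 2*sqrt 2))) by nra.
    destruct (Rlt_or_le a ((2 - sqrt 2)/4)) as [Hlt|Hge].
    + assert (H := g_sign a 1 _ Hpos Hw0 (HS 2%nat)).
      replace (1 - a * (-(2 + 2*sqrt 2))) with (1 + a*(2+2*sqrt 2)) in H by ring.
      change (INR 2) with 2 in H. rewrite F_S2 in H.
      assert (Hq : 0 < (72+60*sqrt 2) - (432+312*sqrt 2)*a + (864+576*sqrt 2)*a^2).
      { assert ((432+312*sqrt 2)*a <= 873.27*a) by nra.
        assert (1678.57*a^2 <= (864+576*sqrt 2)*a^2) by (assert (0 <= a^2) by nra; nra).
        nra. }
      assert (a*(a-(2-sqrt 2)/4) < 0) by nra. nra.
    + assert (Hgt : (2 - sqrt 2)/4 < a) by (destruct Hge; [auto|congruence]).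
      destruct (Rle_or_lt a 0.38) as [Hb|Hb].
      * assert (H := g_sign a 0 _ Hpos Hw0 (HS 1%nat)).
        replace (1 - a * (-(2 + 2*sqrt 2))) with (1 + a*(2+2*sqrt 2)) in H by ring.
        change (INR 1) with 1 in H. rewrite F_S1 in H.
        assert ((-336-216*sqrt 2) + (864+576*sqrt 2)*a < 0) by nra.
        assert (0 < a^2) by nra.
        assert (a^2*(a-(2-sqrt 2)/4) > 0) by nra. nra.
      * destruct (Rle_or_lt a 1.85) as [Hc|Hc].
        -- assert (H := g0_sign a (-24/5) Hpos ltac:(lra) (Hg 0%nat (-24/5) ltac:(lra))).
           assert (0 <= (a-0.38)*(1.85-a)) by nra.
           assert (0 <= (a-0.38)*(1.85-a)*a) by nra.
           unfold Pa in H. nra.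
        -- assert (Hx : -(2 + 2*sqrt 2) < -1/(6*a) <= 0).
           { split.
             - assert (1/(6*a) < 1) by (apply (Rmult_lt_reg_r (6*a)); [lra|]; field_simplify; lra).
               lra.
             - assert (0 < 1/(6*a)) by (apply Rdiv_lt_0_compat; lra). lra. }
           assert (Hw3 : 0 < 1 - a * (-1/(6*a))) by (field_simplify; lra).
           assert (H := g_sign a 2 _ Hpos Hw3 (Hg 3%nat _ Hx)).
           replace (1 - a * (-1/(6*a))) with (7/6) in H by (field; lra).
           unfold F in H; simpl INR in H. nra.
Qed.

Lemma mvt_step (f f' : R -> R) M k : 0 <= M -> f 0 = 0 ->
  (forall c, Rabs c <= 1 -> derivable_pt_lim f c (f' c)) ->
  (forall c, Rabs c <= 1 -> Rabs (f' c) <= M * Rabs c ^ k) ->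
  forall z, Rabs z <= 1 -> Rabs (f z) <= M * Rabs z ^ (S k).
Proof.
  intros HM H0 Hd Hb z Hz.
  destruct (MVT_abs f f' 0 z) as [c [Hc Hcb]].
  - intros c Hc. apply Hd.
    unfold Rmin, Rmax in Hc. destruct (Rle_dec 0 z); apply Rabs_le; apply Rabs_le_between in Hz; lra.
  - assert (Hcz : Rabs c <= Rabs z).
    { unfold Rmin, Rmax in Hcb. destruct (Rle_dec 0 z).
      - rewrite !Rabs_right; lra.
      - rewrite !Rabs_left1; lra. }
    rewrite H0, Rminus_0_r in Hc. rewrite Rminus_0_r in Hc. rewrite Hc.
    simpl. rewrite (Rmult_comm (Rabs z)), <- Rmult_assoc.
    apply Rmult_le_compat_r; [apply Rabs_pos|].
    eapply Rle_trans; [apply Hb; lra|].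
    apply Rmult_le_compat_l; auto. apply pow_incr. split; [apply Rabs_pos| auto].
Qed.

Lemma exp_taylor z : Rabs z <= 1 ->
  Rabs (exp z - (1 + z + z^2/2 + z^3/6)) <= 3 * Rabs z ^ 4.
Proof.
  assert (H0 : forall c, Rabs c <= 1 -> Rabs (exp c) <= 3 * Rabs c ^ 0).
  { intros c Hc. simpl. rewrite Rabs_right by (left; apply exp_pos).
    apply Rle_trans with (exp 1); [|rewrite Rmult_1_r; apply exp_le_3].
    apply Rabs_le_between in Hc. destruct (Rle_lt_or_eq_dec c 1); [lra| |].
    - left; apply exp_increasing; auto.
    - subst; lra. }
  assert (H1 := mvt_step (fun z => exp z - 1) exp 3 0 ltac:(lra) ltac:(cbv beta; rewrite exp_0; ring)
     ltac:(intros c _; apply is_derive_Reals; auto_derive; [exact I| simpl; ring]) H0).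
  assert (H2 := mvt_step (fun z => exp z - 1 - z) (fun z => exp z - 1) 3 1 ltac:(lra) ltac:(cbv beta; rewrite exp_0; ring)
     ltac:(intros c _; apply is_derive_Reals; auto_derive; [exact I| simpl; ring]) H1).
  assert (H3 := mvt_step (fun z => exp z - 1 - z - z^2/2) (fun z => exp z - 1 - z) 3 2 ltac:(lra) ltac:(cbv beta; rewrite exp_0; simpl; field)
     ltac:(intros c _; apply is_derive_Reals; auto_derive; [exact I| simpl; field]) H2).
  assert (H4 := mvt_step (fun z => exp z - 1 - z - z^2/2 - z^3/6) (fun z => exp z - 1 - z - z^2/2) 3 3 ltac:(lra) ltac:(cbv beta; rewrite exp_0; simpl; field)
     ltac:(intros c _; apply is_derive_Reals; auto_derive; [exact I| simpl; field]) H3).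
  intro Hz. specialize (H4 z Hz). simpl in H4.
  replace (exp z - (1 + z + z^2/2 + z^3/6)) with (exp z - 1 - z - z^2/2 - z^3/6) by ring.
  simpl. exact H4.
Qed.

Lemma small_zero d M del : 0 < del -> (forall z, 0 < z < del -> Rabs d <= M * z) -> d = 0.
Proof.
  intros Hd H. destruct (Req_dec d 0) as [|Hne]; auto. exfalso.
  assert (Hp : 0 < Rabs d) by (apply Rabs_pos_lt; auto).
  destruct (Rle_or_lt M 0) as [HM|HM].
  - specialize (H (del/2) ltac:(lra)). nra.
  - set (z := Rmin (del/2) (Rabs d / (2*M))).
    assert (Hz1 : z <= del/2) by apply Rmin_l.
    assert (Hz2 : z <= Rabs d / (2*M)) by apply Rmin_r.
    assert (Hz0 : 0 < z) by (apply Rmin_pos; [lra| apply Rdiv_lt_0_compat; lra]).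
    specialize (H z ltac:(lra)).
    assert (M * z <= M * (Rabs d / (2*M))) by (apply Rmult_le_compat_l; lra).
    replace (M * (Rabs d / (2*M))) with (Rabs d / 2) in * by (field; lra). lra.
Qed.

Lemma abs_cz c z k : 0 < z < 1 -> Rabs (c * z^(S k)) <= Rabs c * z.
Proof.
  intros Hz. rewrite Rabs_mult, <- RPow_abs, (Rabs_right z) by lra.
  apply Rmult_le_compat_l; [apply Rabs_pos|].
  assert (z^k <= 1) by (rewrite <- (pow1 k); apply pow_incr; lra).
  assert (0 <= z^k) by (apply pow_le; lra).
  simpl. nra.
Qed.

Lemma Kz K z k : 0 < z < 1 -> K * z^(S k) <= Rabs K * z.
Proof. intro Hz. eapply Rle_trans; [apply Rle_abs| apply abs_cz; auto]. Qed.

Lemma div_zk X K z j m : 0 < z -> Rabs (z^j * X) <= K * z^(j + m) -> Rabs X <= K * z^m.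
Proof.
  intros Hz H. rewrite Rabs_mult, (Rabs_right (z^j)) in H by (left; apply pow_lt; lra).
  rewrite pow_add in H.
  assert (0 < z^j) by (apply pow_lt; lra).
  apply (Rmult_le_reg_l (z^j)); auto. lra.
Qed.

Lemma cubic_zero d0 d1 d2 d3 K del : 0 < del ->
  (forall z, 0 < z < del -> Rabs (d0 + d1*z + d2*z^2 + d3*z^3) <= K * z^4) ->
  d0 = 0 /\ d1 = 0 /\ d2 = 0 /\ d3 = 0.
Proof.
  intros Hdel H.
  set (e := Rmin del 1).
  assert (He : 0 < e) by (apply Rmin_pos; lra).
  assert (He1 : e <= del) by apply Rmin_l. assert (He2 : e <= 1) by apply Rmin_r.
  assert (HK : forall z, 0 < z < e -> K * z^4 <= Rabs K * z) by (intros z Hz; apply (Kz K z 3); lra).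
  assert (H0 : d0 = 0).
  { apply (small_zero _ (Rabs K + Rabs d1 + Rabs d2 + Rabs d3) e He).
    intros z Hz. specialize (H z ltac:(lra)). specialize (HK z Hz).
    assert (A1 := abs_cz d1 z 0 ltac:(lra)). assert (A2 := abs_cz d2 z 1 ltac:(lra)).
    assert (A3 := abs_cz d3 z 2 ltac:(lra)). simpl pow in A1, A2, A3.
    replace d0 with ((d0 + d1*z + d2*z^2 + d3*z^3) - (d1*(z*1)) - (d2*(z*(z*1))) - (d3*(z*(z*(z*1))))) by ring.
    eapply Rle_trans; [apply Rabs_triang|]. rewrite Rabs_Ropp.
    eapply Rle_trans; [apply Rplus_le_compat_r; apply Rabs_triang|]. rewrite Rabs_Ropp.
    eapply Rle_trans; [apply Rplus_le_compat_r; apply Rplus_le_compat_r; apply Rabs_triang|]. rewrite Rabs_Ropp.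
    lra. }
  subst d0.
  assert (H1 : d1 = 0).
  { apply (small_zero _ (Rabs K + Rabs d2 + Rabs d3) e He).
    intros z Hz. specialize (H z ltac:(lra)).
    assert (B : Rabs (d1 + d2*z + d3*z^2) <= K * z^3).
    { apply (div_zk _ _ z 1 3); [lra|].
      replace (z^1 * (d1 + d2 * z + d3 * z^2)) with (0 + d1 * z + d2 * z^2 + d3 * z^3) by ring.
      replace (K * z^(1+3)) with (K * z^4) by reflexivity. exact H. }
    assert (HK3 : K * z^3 <= Rabs K * z) by (apply (Kz K z 2); lra).
    assert (A2 := abs_cz d2 z 0 ltac:(lra)). assert (A3 := abs_cz d3 z 1 ltac:(lra)). simpl pow in A2, A3, B, HK3.
    replace d1 with ((d1 + d2*z + d3*(z*(z*1))) - (d2*(z*1)) - (d3*(z*(z*1)))) by ring.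
    eapply Rle_trans; [apply Rabs_triang|]. rewrite Rabs_Ropp.
    eapply Rle_trans; [apply Rplus_le_compat_r; apply Rabs_triang|]. rewrite Rabs_Ropp.
    lra. }
  subst d1.
  assert (H2 : d2 = 0).
  { apply (small_zero _ (Rabs K + Rabs d3) e He).
    intros z Hz. specialize (H z ltac:(lra)).
    assert (B : Rabs (d2 + d3*z) <= K * z^2).
    { apply (div_zk _ _ z 2 2); [lra|].
      replace (z^2 * (d2 + d3 * z)) with (0 + 0 * z + d2 * z^2 + d3 * z^3) by ring.
      replace (K * z^(2+2)) with (K * z^4) by reflexivity. exact H. }
    assert (HK2 : K * z^2 <= Rabs K * z) by (apply (Kz K z 1); lra).
    assert (A3 := abs_cz d3 z 0 ltac:(lra)). simpl pow in A3, B, HK2.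
    replace d2 with ((d2 + d3*z) - (d3*(z*1))) by ring.
    eapply Rle_trans; [apply Rabs_triang|]. rewrite Rabs_Ropp. lra. }
  subst d2.
  assert (H3 : d3 = 0).
  { apply (small_zero _ (Rabs K) e He).
    intros z Hz. specialize (H z ltac:(lra)).
    assert (B : Rabs d3 <= K * z).
    { replace (K * z) with (K * z^1) by ring. apply (div_zk _ _ z 3 1); [lra|].
      replace (z^3 * d3) with (0 + 0 * z + 0 * z^2 + d3 * z^3) by ring.
      replace (K * z^(3+1)) with (K * z^4) by reflexivity. exact H. }
    assert (K * z <= Rabs K * z) by (apply Rmult_le_compat_r; [lra| apply Rle_abs]). lra. }
  auto.
Qed.

Definition Kc a := 8 * (Rabs (-a/2 + 3*a^2/2 - a^3) + Rabs (a^2/2 - a^3/2) + Rabs (-a^3/6)) + 3.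

Lemma psi_close a z : Rabs z <= 1 -> Rabs (a*z) <= 1/2 ->
  Rabs (Pa a z / (1 - a*z)^3 - exp z) <= Kc a * Rabs z ^ 4.
Proof.
  intros Hz Haz. apply Rabs_le_between in Haz.
  set (w := 1 - a*z). assert (Hw : 1/2 <= w) by (unfold w; lra).
  set (r0 := -a/2 + 3*a^2/2 - a^3). set (r1 := a^2/2 - a^3/2). set (r2 := -a^3/6).
  assert (E : Pa a z / w^3 - exp z = - (exp z - (1 + z + z^2/2 + z^3/6)) - z^4 * (r0 + r1*z + r2*z^2) / w^3).
  { unfold Pa, w, r0, r1, r2. field. lra. }
  rewrite E.
  assert (HR : Rabs (r0 + r1*z + r2*z^2) <= Rabs r0 + Rabs r1 + Rabs r2).
  { eapply Rle_trans; [apply Rabs_triang|]. eapply Rle_trans; [apply Rplus_le_compat_r; apply Rabs_triang|].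
    rewrite !Rabs_mult. rewrite <- RPow_abs.
    assert (Rabs z ^ 2 <= 1) by (rewrite <- (pow1 2); apply pow_incr; split; [apply Rabs_pos|auto]).
    pose proof (Rabs_pos r1). pose proof (Rabs_pos r2). pose proof (Rabs_pos z). nra. }
  assert (Hw3 : 1/8 <= w^3) by (replace (1/8) with ((1/2)^3) by field; apply pow_incr; lra).
  eapply Rle_trans; [apply Rabs_triang|]. rewrite Rabs_Ropp.
  assert (T1 := exp_taylor z Hz).
  assert (T2 : Rabs (z^4 * (r0 + r1*z + r2*z^2) / w^3) <= 8 * (Rabs r0 + Rabs r1 + Rabs r2) * Rabs z ^ 4).
  { unfold Rdiv. rewrite !Rabs_mult, <- RPow_abs, Rabs_inv, (Rabs_right (w^3)) by lra.
    assert (0 < / w^3 <= 8).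
    { split; [apply Rinv_0_lt_compat; lra|].
      replace 8 with (/ (1/8)) by field. apply Rinv_le_contravar; lra. }
    assert (0 <= Rabs z ^ 4) by (apply pow_le, Rabs_pos).
    assert (0 <= Rabs (r0 + r1 * z + r2 * z ^ 2)) by apply Rabs_pos.
    assert (Rabs (r0 + r1 * z + r2 * z ^ 2) * / w^3 <= (Rabs r0 + Rabs r1 + Rabs r2) * 8)
      by (apply Rmult_le_compat; lra).
    assert (Rabs z ^ 4 * (Rabs (r0 + r1 * z + r2 * z ^ 2) * / w^3) <= Rabs z ^ 4 * ((Rabs r0 + Rabs r1 + Rabs r2) * 8))
      by (apply Rmult_le_compat_l; lra).
    nra. }
  unfold Kc. fold r0 r1 r2. rewrite Rabs_Ropp. lra.
Qed.

Lemma PiHat_psi a : PiHat 3 3 (psi_num a) a.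
Proof.
  split; [simpl; lia|].
  exists (Kc a), (Rmin 1 (1 / (2 * (Rabs a + 1)))).
  assert (Ha : 0 <= Rabs a) by apply Rabs_pos.
  split; [apply Rmin_pos; [lra| apply Rdiv_lt_0_compat; lra]|].
  intros z Hz.
  assert (H1 : Rabs z <= 1) by (left; eapply Rlt_le_trans; [exact Hz| apply Rmin_l]).
  assert (H2 : Rabs z <= 1 / (2 * (Rabs a + 1))) by (left; eapply Rlt_le_trans; [exact Hz| apply Rmin_r]).
  rewrite peval_psi, den_eq.
  apply psi_close; auto.
  rewrite Rabs_mult.
  apply Rle_trans with (Rabs a * (1 / (2 * (Rabs a + 1)))).
  - apply Rmult_le_compat_l; auto.
  - apply (Rmult_le_reg_r (2 * (Rabs a + 1))); [lra|].
    field_simplify; lra.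
Qed.

Lemma cubic_form (P : list R) : (length P <= 4)%nat ->
  exists p0 p1 p2 p3, forall y, peval P y = p0 + p1*y + p2*y^2 + p3*y^3.
Proof.
  intro H.
  destruct P as [|p0 [|p1 [|p2 [|p3 [|p4 l]]]]].
  - exists 0, 0, 0, 0; intro; simpl; ring.
  - exists p0, 0, 0, 0; intro; simpl; ring.
  - exists p0, p1, 0, 0; intro; simpl; ring.
  - exists p0, p1, p2, 0; intro; simpl; ring.
  - exists p0, p1, p2, p3; intro; simpl; ring.
  - simpl in H. lia.
Qed.

Lemma PiHat_unique P a : PiHat 3 3 P a -> forall y, peval P y = Pa a y.
Proof.
  intros [Hlen [C [d [Hd HB]]]].
  destruct (PiHat_psi a) as [_ [C' [d' [Hd' HB']]]].
  destruct (cubic_form P Hlen) as [p0 [p1 [p2 [p3 Hp]]]].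
  set (del := Rmin (Rmin d d') (Rmin 1 (1 / (2 * (Rabs a + 1))))).
  assert (Ha : 0 <= Rabs a) by apply Rabs_pos.
  assert (Hdel : 0 < del) by (repeat apply Rmin_pos; try lra; apply Rdiv_lt_0_compat; lra).
  assert (Hd1 : del <= d) by (unfold del; eapply Rle_trans; [apply Rmin_l| apply Rmin_l]).
  assert (Hd2 : del <= d') by (unfold del; eapply Rle_trans; [apply Rmin_l| apply Rmin_r]).
  assert (Hd3 : del <= 1) by (unfold del; eapply Rle_trans; [apply Rmin_r| apply Rmin_l]).
  assert (Hd4 : del <= 1 / (2 * (Rabs a + 1))) by (unfold del; eapply Rle_trans; [apply Rmin_r| apply Rmin_r]).
  destruct (cubic_zero (p0 - 1) (p1 - (1 - 3*a)) (p2 - (6*a^2 - 6*a + 1)/2)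
              (p3 - (-6*a^3 + 18*a^2 - 9*a + 1)/6) (4 * (Rabs C + Rabs C')) del Hdel)
    as [E0 [E1 [E2 E3]]].
  - intros z Hz.
    assert (Hza : Rabs z = z) by (apply Rabs_right; lra).
    assert (Haz : Rabs (a*z) <= 1/2).
    { rewrite Rabs_mult, Hza.
      apply Rle_trans with (Rabs a * (1 / (2 * (Rabs a + 1)))).
      - apply Rmult_le_compat_l; lra.
      - apply (Rmult_le_reg_r (2 * (Rabs a + 1))); [lra|]. field_simplify; lra. }
    apply Rabs_le_between in Haz.
    specialize (HB z ltac:(rewrite Hza; lra)). specialize (HB' z ltac:(rewrite Hza; lra)).
    rewrite Hza in HB, HB'. rewrite den_eq, Hp in HB. rewrite den_eq, peval_psi in HB'.
    set (w := 1 - a*z) in *.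
    assert (Hw : 1/2 <= w <= 3/2) by (unfold w; lra).
    assert (Hw3 : 0 < w^3 <= 4).
    { split; [apply pow_lt; lra|]. apply Rle_trans with ((3/2)^3); [apply pow_incr; lra| lra]. }
    replace (p0 - 1 + (p1 - (1 - 3 * a)) * z + (p2 - (6 * a ^ 2 - 6 * a + 1) / 2) * z ^ 2 +
      (p3 - (-6 * a ^ 3 + 18 * a ^ 2 - 9 * a + 1) / 6) * z ^ 3)
      with (w^3 * (((p0 + p1 * z + p2 * z ^ 2 + p3 * z ^ 3) / w^3 - exp z) - (Pa a z / w^3 - exp z)))
      by (unfold Pa; field; lra).
    rewrite Rabs_mult, (Rabs_right (w^3)) by lra.
    assert (Hz4 : 0 <= z^4) by (apply pow_le; lra).
    assert (X : Rabs ((p0 + p1 * z + p2 * z ^ 2 + p3 * z ^ 3) / w ^ 3 - exp z - (Pa a z / w ^ 3 - exp z))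
              <= (Rabs C + Rabs C') * z^4).
    { unfold Rminus at 1. eapply Rle_trans; [apply Rabs_triang|]. rewrite Rabs_Ropp.
      assert (C * z^4 <= Rabs C * z^4) by (apply Rmult_le_compat_r; [lra|apply Rle_abs]).
      assert (C' * z^4 <= Rabs C' * z^4) by (apply Rmult_le_compat_r; [lra|apply Rle_abs]).
      lra. }
    assert (0 <= (Rabs C + Rabs C') * z^4) by (apply Rmult_le_pos; [pose proof (Rabs_pos C); pose proof (Rabs_pos C'); lra|lra]).
    assert (w^3 * Rabs ((p0 + p1 * z + p2 * z ^ 2 + p3 * z ^ 3) / w ^ 3 - exp z - (Pa a z / w ^ 3 - exp z))
      <= 4 * ((Rabs C + Rabs C') * z^4)).
    { apply Rmult_le_compat; try lra. apply Rabs_pos. }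
    lra.
  - intro y. rewrite Hp. unfold Pa.
    replace p0 with 1 by lra. replace p1 with (1 - 3*a) by lra.
    replace p2 with ((6*a^2 - 6*a + 1)/2) by lra.
    replace p3 with ((-6*a^3 + 18*a^2 - 9*a + 1)/6) by lra. reflexivity.
Qed.

Lemma part3 : is_lub (AM_radius_set (peval (psi_num ((2 - sqrt 2) / 4)))
                        (den 3 ((2 - sqrt 2) / 4))) (2 + sqrt 8).
Proof.
  pose proof s2_bounds as hb. pose proof sqrt8 as h8.
  split.
  - intros r [[Hr Hall] | ->]; [|lra].
    destruct (Rle_or_lt r (2 + sqrt 8)) as [|Hlt]; auto. exfalso.
    set (x := - Rmin r (3 + 2*sqrt 2)).
    assert (Hm1 : Rmin r (3 + 2*sqrt 2) <= r) by apply Rmin_l.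
    assert (Hm2 : Rmin r (3 + 2*sqrt 2) <= 3 + 2*sqrt 2) by apply Rmin_r.
    assert (Hm3 : 2 + 2*sqrt 2 < Rmin r (3 + 2*sqrt 2)) by (apply Rmin_glb_lt; lra).
    apply (notam_ast x); [unfold x; lra|]. apply Hall. unfold x; lra.
  - intros b Hb. apply Hb. left. split; [lra|]. intros x Hx. apply am_ast. lra.
Qed.

Lemma part4 a : a <> (2 - sqrt 2)/4 ->
  exists m, is_lub (AM_radius_set (peval (psi_num a)) (den 3 a)) m /\ m < 2 + sqrt 8.
Proof.
  intro Hne. pose proof (key a Hne) as Hk.
  apply not_all_ex_not in Hk. destruct Hk as [x0 Hx0].
  apply imply_to_and in Hx0. destruct Hx0 as [Hx0 Hnot].
  assert (Hb : forall r, AM_radius_set (peval (psi_num a)) (den 3 a) r -> r <= - x0).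
  { intros r [[Hr Hall] | ->]; [|lra].
    destruct (Rle_or_lt r (- x0)) as [|Hlt]; auto. exfalso. apply Hnot, Hall. lra. }
  destruct (completeness (AM_radius_set (peval (psi_num a)) (den 3 a))) as [m Hm].
  - exists (- x0). intros r Hr. apply Hb; auto.
  - exists 0. right. reflexivity.
  - exists m. split; auto. destruct Hm as [_ Hm]. specialize (Hm (- x0) Hb). lra.
Qed.

Theorem mainTheorem18 :
  (* every element of \hat\Pi_{3/3,3} equals some psi_b as a rational function *)
  (forall (P : list R) (a : R), PiHat 3 3 P a ->
     exists b : R, forall z : R,
       peval P z * den 3 b z = peval (psi_num b) z * den 3 a z) /\
  (* \hat R_{3/3,3} = sup over the class of R(psi) = 2 + sqrt 8 *)
  is_lub (fun r => exists (P : list R) (a : R),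
                     PiHat 3 3 P a /\ AM_radius_set (peval P) (den 3 a) r)
         (2 + sqrt 8) /\
  (* attained at a = (2 - sqrt 2)/4 *)
  is_lub (AM_radius_set (peval (psi_num ((2 - sqrt 2) / 4)))
                        (den 3 ((2 - sqrt 2) / 4)))
         (2 + sqrt 8) /\
  (* R(psi_a) < 2 + sqrt 8 for every other a *)
  (forall a : R, a <> (2 - sqrt 2) / 4 ->
     exists m : R, is_lub (AM_radius_set (peval (psi_num a)) (den 3 a)) m /\
                   m < 2 + sqrt 8).
Proof.
  split; [|split; [|split; [exact part3| exact part4]]].
  - intros P a HP. exists a. intro z. rewrite (PiHat_unique P a HP z), peval_psi. reflexivity.
  - split.
    + intros r [P [a [HP Hr]]].
      assert (Heq : peval P = peval (psi_num a)).
      { apply functional_extensionality. intro y. rewrite (PiHat_unique P a HP y), peval_psi. reflexivity. }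
      rewrite Heq in Hr.
      destruct (Req_dec a ((2 - sqrt 2)/4)) as [->|Hne].
      * destruct part3 as [Hub _]. apply Hub; auto.
      * destruct (part4 a Hne) as [m [[Hm _] Hlt]]. specialize (Hm r Hr). lra.
    + intros b Hb. apply Hb. exists (psi_num ((2 - sqrt 2)/4)), ((2 - sqrt 2)/4).
      split; [apply PiHat_psi|].
      destruct part3 as [_ Hl].
      left. pose proof s2_bounds. rewrite sqrt8. split; [lra|].
      intros x Hx. apply am_ast. rewrite sqrt8. lra.
Qed.
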